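(* Let $R$ be a commutative ring. The following are equivalent: (1) $R$ is feckly clean; (2) $\operatorname{Max}(R)$ is a strongly zero-dimensional Hausdorff space; (3) $\operatorname{Max}(R)$ is strongly zero-dimensional, and whenever $a,b\in R$ satisfy $a+b=1$ there exist $r,s\in R$ with $(1+ar)(1+bs)\in J(R)$; (4) whenever $a,b\in R$ satisfy $a+b=1$, there exist $r,s,e\in R$ with $1+ar\in eR$, $1+bs\in(1-e)R$ and $e-e^2\in J(R)$.
   Context: Rings have identity; $J(R)$ is the Jacobson radical. An element $u\in R$ is full if $RuR=R$ (for commutative $R$ this means $u$ is a unit). An element $a\in R$ is feckly clean if there exist $e\in R$ and a full element $u\in R$ with $a=e+u$ and $eR(1-e)\subseteq J(R)$; $R$ is feckly clean if every element is feckly clean. $\operatorname{Max}(R)$ is the set of maximal ideals of $R$, topologized so that the closed sets are exactly the sets $V(I)=\{P\in\operatorname{Max}(R): I\subseteq P\}$ for ideals $I$. A topological space $X$ is strongly zero-dimensional if for any two disjoint closed sets $A,B\subseteq X$ there exist disjoint clopen sets $C_1,C_2$ with $A\subseteq C_1$ and $B\subseteq C_2$. *)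

(* Defs.v *)
From HB Require Import structures.
From mathcomp Require Import all_boot all_order all_algebra.
Set Implicit Arguments. Unset Strict Implicit. Unset Printing Implicit Defensive.
Import GRing.Theory.
Local Open Scope ring_scope.

Section Defs.
Variable R : comPzRingType.

Definition is_ideal (I : R -> Prop) : Prop :=
  I 0 /\ (forall x y, I x -> I y -> I (x + y)) /\ (forall r x, I x -> I (r * x)).

Definition maximal_ideal (M : R -> Prop) : Prop :=
  is_ideal M /\ ~ M 1 /\
  forall I, is_ideal I -> (forall x, M x -> I x) -> ~ I 1 -> forall x, I x -> M x.

Definition jacobson (x : R) : Prop :=
  forall M, maximal_ideal M -> M x.

(* u is full: the (two-sided) ideal RuR generated by u is all of R, i.e.
   every ideal containing u contains 1. *)
Definition full (u : R) : Prop :=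
  forall I, is_ideal I -> I u -> I 1.

Definition feckly_clean_elt (a : R) : Prop :=
  exists e u, a = e + u /\ full u /\ forall r, jacobson (e * r * (1 - e)).

Definition feckly_clean : Prop := forall a : R, feckly_clean_elt a.

Definition MaxR := { M : R -> Prop | maximal_ideal M }.

Definition Max_closed (A : MaxR -> Prop) : Prop :=
  exists I, is_ideal I /\ forall P : MaxR, A P <-> (forall x, I x -> sval P x).

Definition Max_same (P Q : MaxR) : Prop := forall x, sval P x <-> sval Q x.

End Defs.

Section Topo.
Variables (X : Type) (closed : (X -> Prop) -> Prop).

Definition is_open (U : X -> Prop) : Prop := closed (fun x => ~ U x).
Definition clopen (C : X -> Prop) : Prop := closed C /\ is_open C.

(* [same] is the identity-of-points relation of the space X. *)
Definition hausdorff (same : X -> X -> Prop) : Prop :=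
  forall x y : X, ~ same x y ->
    exists U V, is_open U /\ is_open V /\ U x /\ V y /\ forall z, ~ (U z /\ V z).

Definition strongly_zero_dim : Prop :=
  forall A B, closed A -> closed B -> (forall z, ~ (A z /\ B z)) ->
    exists C1 C2, clopen C1 /\ clopen C2 /\ (forall z, A z -> C1 z) /\
      (forall z, B z -> C2 z) /\ (forall z, ~ (C1 z /\ C2 z)).
End Topo.

(* Main.v *)
Require Import Defs.
From HB Require Import structures.
From mathcomp Require Import all_boot all_order all_algebra.
From mathcomp Require Import ring.
From mathcomp Require classical_sets.
From Stdlib Require Import Classical.
Import GRing.Theory.
Local Open Scope ring_scope.

Section Aux.
Set Implicit Arguments. Unset Strict Implicit.
Variable R : comPzRingType.
Implicit Types (I K M : R -> Prop) (x y r a : R).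

Definition princ (a : R) : R -> Prop := fun x => exists r, x = a * r.

Lemma princ_ideal a : is_ideal (princ a).
Proof.
split; first by exists 0; rewrite mulr0.
split.
- move=> x y [r1 ->] [r2 ->]; exists (r1 + r2); by rewrite mulrDr.
- move=> r x [t ->]; exists (r * t); ring.
Qed.

Lemma ideal0 I : is_ideal I -> I 0.
Proof. by case. Qed.
Lemma idealD I x y : is_ideal I -> I x -> I y -> I (x + y).
Proof. by case=> _ [H _]; apply: H. Qed.
Lemma idealM I r x : is_ideal I -> I x -> I (r * x).
Proof. by case=> _ [_ H]; apply: H. Qed.
Lemma idealMr I r x : is_ideal I -> I x -> I (x * r).
Proof. by move=> HI Hx; rewrite mulrC; apply: idealM. Qed.
Lemma idealN I x : is_ideal I -> I x -> I (- x).
Proof. move=> HI Hx; rewrite -mulN1r; exact: idealM. Qed.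
Lemma idealB I x y : is_ideal I -> I x -> I y -> I (x - y).
Proof. move=> HI Hx Hy; apply: idealD => //; exact: idealN. Qed.

Lemma full_unit (u : R) : full u -> exists v, u * v = 1.
Proof.
move=> Hu; have [v Hv] := Hu _ (princ_ideal u) (ex_intro _ 1 (esym (mulr1 u))).
by exists v.
Qed.

Lemma unit_full (u v : R) : u * v = 1 -> full u.
Proof.
move=> Huv I HI Hu; rewrite -Huv; exact: idealMr.
Qed.

Lemma exists_max (I : R -> Prop) : is_ideal I -> ~ I 1 ->
  exists M, maximal_ideal M /\ forall x, I x -> M x.
Proof.
move=> HI HI1.
pose P (X : R -> Prop) := (forall x, ~ X x) \/ (is_ideal X /\ ~ X 1 /\ forall x, I x -> X x).
have Pne X x : P X -> X x -> is_ideal X /\ ~ X 1 /\ forall x, I x -> X x.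
  by case=> [H|//] Hx; case: (H x Hx).
case: (@classical_sets.Zorn_bigcup R P); last first.
  move=> A [PA Amax].
  have [HA [HA1 HIA]] : is_ideal A /\ ~ A 1 /\ forall x, I x -> A x.
    case: PA => [H|//].
    exfalso; apply: (Amax I).
    + split; first by move=> t At; case: (H t At).
      by move=> S; apply: (H 0); apply: S; apply: ideal0.
    + by right.
  exists A; split => //; split => //; split => // J HJ HAJ HJ1 x Jx.
  apply: NNPP => nAx.
  apply: (Amax J).
  + split; first exact: HAJ.
    by move=> S; apply: nAx; apply: S.
  + right; split => //; split => // y Iy; apply: HAJ; exact: HIA.
  move=> F FP Ftot.
  case: (classic (exists X, F X /\ exists x, X x)) => [[X0 [FX0 [x0 Hx0]]]|Hn].
  - right.
    have [HX0 [_ HIX0]] := Pne X0 x0 (FP _ FX0) Hx0.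
    split; [split; [|split]|split].
    + by exists X0 => //; apply: ideal0.
    + move=> x y [X1 FX1 Hx] [X2 FX2 Hy].
      have [H1 _] := Pne X1 x (FP _ FX1) Hx.
      have [H2 _] := Pne X2 y (FP _ FX2) Hy.
      case: (Ftot _ _ FX1 FX2) => S.
      * by exists X2 => //; apply: idealD => //; apply: S.
      * by exists X1 => //; apply: idealD => //; apply: S.
    + move=> r x [X1 FX1 Hx].
      have [H1 _] := Pne X1 x (FP _ FX1) Hx.
      by exists X1 => //; apply: idealM.
    + move=> [X1 FX1 Hx].
      by have [_ [H1 _]] := Pne X1 1 (FP _ FX1) Hx.
    + by move=> x Hx; exists X0 => //; apply: HIX0.
  - left => x [X FX Hx]; apply: Hn; exists X; split => //; by exists x.
Qed.

Lemma max_ideal M : maximal_ideal M -> is_ideal M.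
Proof. by case. Qed.
Lemma max_not1 M : maximal_ideal M -> ~ M 1.
Proof. by case=> _ []. Qed.

Lemma max_comax M x : maximal_ideal M -> ~ M x ->
  exists m t, M m /\ 1 = m + x * t.
Proof.
move=> HM nx.
have [HMi [HM1 HMmax]] := HM.
pose I y := exists m t, M m /\ y = m + x * t.
have HI : is_ideal I.
  split; first by exists 0, 0; split; [exact: ideal0|]; rewrite mulr0 addr0.
  split.
  - move=> y z [m1 [t1 [Hm1 ->]]] [m2 [t2 [Hm2 ->]]].
    exists (m1 + m2), (t1 + t2); split; first exact: idealD.
    ring.
  - move=> r y [m1 [t1 [Hm1 ->]]].
    exists (r * m1), (r * t1); split; first exact: idealM.
    ring.
apply: NNPP => H; apply: nx.
apply: (HMmax I HI).
- by move=> y My; exists y, 0; split => //; rewrite mulr0 addr0.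
- by move=> [m [t [Hm E]]]; apply: H; exists m, t.
- by exists 0, 1; split; [exact: ideal0|]; rewrite mulr1 add0r.
Qed.

Lemma max_prime M x y : maximal_ideal M -> M (x * y) -> M x \/ M y.
Proof.
move=> HM Hxy; case: (classic (M x)) => [|nx]; first by left.
right; have [m [t [Hm E]]] := max_comax HM nx.
have -> : y = m * y + t * (x * y) by rewrite -[y in LHS]mul1r E; ring.
have HMi := max_ideal HM.
apply: idealD => //; [exact: idealMr | exact: idealM].
Qed.

Lemma max_sum1 M x y : maximal_ideal M -> M x -> M y -> x + y = 1 -> False.
Proof.
move=> HM Hx Hy E; apply: (max_not1 HM); rewrite -E.
apply: idealD => //; exact: max_ideal.
Qed.

Lemma jac_unit x : jacobson x -> exists v, (1 + x) * v = 1.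
Proof.
move=> Jx; apply: NNPP => H.
have [M [HM HsM]] := exists_max (princ_ideal (1 + x)) (fun '(ex_intro r E) => H (ex_intro _ r (esym E))).
have M1 : M (1 + x) by apply: HsM; exists 1; rewrite mulr1.
apply: (max_not1 HM).
have -> : (1 : R) = (1 + x) - x by ring.
apply: idealB => //; [exact: max_ideal| exact: Jx].
Qed.

Lemma jacM r x : jacobson x -> jacobson (r * x).
Proof. move=> Jx M HM; apply: idealM; [exact: max_ideal|exact: Jx]. Qed.

Lemma ideal_sum_one (I K : R -> Prop) : is_ideal I -> is_ideal K ->
  (forall M, maximal_ideal M -> (forall x, I x -> M x) -> (forall x, K x -> M x) -> False) ->
  exists i k, I i /\ K k /\ 1 = i + k.
Proof.
move=> HI HK Hno.
pose S y := exists i k, I i /\ K k /\ y = i + k.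
have HS : is_ideal S.
  split; first by exists 0, 0; do !split; try exact: ideal0; rewrite // addr0.
  split.
  - move=> y z [i1 [k1 [Hi1 [Hk1 ->]]]] [i2 [k2 [Hi2 [Hk2 ->]]]].
    exists (i1 + i2), (k1 + k2); do !split; try exact: idealD; ring.
  - move=> r y [i1 [k1 [Hi1 [Hk1 ->]]]].
    exists (r * i1), (r * k1); do !split; try exact: idealM; ring.
apply: NNPP => H.
have [M [HM HSM]] := exists_max HS H.
apply: (Hno M HM).
- by move=> x Ix; apply: HSM; exists x, 0; do !split => //; [apply: ideal0|rewrite addr0].
- by move=> x Kx; apply: HSM; exists 0, x; do !split => //; [apply: ideal0|rewrite add0r].
Qed.

Definition V (a : R) : MaxR R -> Prop := fun P => sval P a.

Lemma V_closed a : Max_closed (V a).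
Proof.
exists (princ a); split; first exact: princ_ideal.
move=> P; split.
- move=> Pa x [r ->]; apply: idealMr => //; exact: max_ideal (svalP P).
- by move=> H; apply: H; exists 1; rewrite mulr1.
Qed.

Lemma V_clopen c d : c + d = 1 -> jacobson (c * d) -> clopen (@Max_closed R) (V c).
Proof.
move=> E J; split; first exact: V_closed.
exists (princ d); split; first exact: princ_ideal.
move=> P; have HP := svalP P; rewrite /V; split.
- move=> nc x [r ->]; apply: idealMr; first exact: max_ideal.
  by case: (max_prime HP (J _ HP)).
- move=> H Pc; apply: (max_sum1 HP Pc _ E); apply: H; exists 1; by rewrite mulr1.
Qed.

End Aux.

Section Main.
Set Implicit Arguments. Unset Strict Implicit.
Variable R : comPzRingType.

Definition C4p : Prop := forall a b : R, a + b = 1 ->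
              exists r s e : R,
                (exists x, 1 + a * r = e * x) /\
                (exists y, 1 + b * s = (1 - e) * y) /\
                jacobson (e - e ^+ 2).

Lemma C1_C4 : feckly_clean R -> C4p.
Proof.
move=> H a b Eab.
have [e [u [Ea [Fu Je]]]] := H a.
have [v Huv] := full_unit Fu.
have Eb : b = 1 - e - u by rewrite -Eab Ea; ring.
exists (- v), v, e; split; [|split].
- exists (- v); rewrite Ea.
  have -> : 1 + (e + u) * - v = 1 - u * v - e * v by ring.
  rewrite Huv; ring.
- exists v; rewrite Eb.
  have -> : 1 + (1 - e - u) * v = 1 - u * v + (1 - e) * v by ring.
  rewrite Huv; ring.
- have -> : e - e ^+ 2 = e * 1 * (1 - e) by ring.
  exact: Je.
Qed.

Lemma C4_C1 : C4p -> feckly_clean R.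
Proof.
move=> H a.
have [r [s [e [[x Hx] [[y Hy] Jd]]]]] := H a (1 - a) (ltac:(ring)).
have Euv : (a - e) * (s * e - r * (1 - e)) =
  1 + (e - e ^+ 2) * (s + r - x - y) - (1 - e) * (1 + a * r - e * x)
    - e * (1 + (1 - a) * s - (1 - e) * y) by ring.
rewrite Hx Hy !subrr !mulr0 !subr0 in Euv.
have [w Hw] := jac_unit (jacM (s + r - x - y) Jd).
exists e, (a - e); split; first ring.
split.
- apply: (@unit_full _ _ ((s * e - r * (1 - e)) * w)).
  by rewrite mulrA Euv -[RHS]Hw; ring.
- move=> t; have -> : e * t * (1 - e) = t * (e - e ^+ 2) by ring.
  exact: jacM.
Qed.

Lemma SZD_C4 : strongly_zero_dim (@Max_closed R) -> C4p.
Proof.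
move=> Hs a b Eab.
have Hdis0 : forall z, ~ (V a z /\ V b z).
  by move=> P [Pa Pb]; exact: (max_sum1 (svalP P) Pa Pb Eab).
have [C1 [C2 [[[I [HI HIc]] [K [HK HKc]]] [_ [HA [HB Hdis]]]]]] :=
  Hs _ _ (V_closed a) (V_closed b) Hdis0.
have [i [k [Ii [Kk E1]]]] : exists i k, I i /\ K k /\ 1 = i + k.
  apply: ideal_sum_one => // M HM HIM HKM.
  exact: ((HKc (exist _ M HM)).2 HKM) ((HIc (exist _ M HM)).2 HIM).
have C1i : forall P, C1 P -> sval P i by move=> P CP; exact: (HIc P).1 CP i Ii.
have C1k : forall P, ~ C1 P -> sval P k by move=> P CP; exact: (HKc P).1 CP k Kk.
have [i1 [k1 [[r0 ->] [[t ->] E2]]]] : exists i1 k1, princ a i1 /\ princ (1 - i) k1 /\ 1 = i1 + k1.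
  apply: ideal_sum_one; try exact: princ_ideal.
  move=> M HM Ha H1; pose P := exist _ M HM.
  have Mi : M i := C1i P (HA P (Ha a (ex_intro _ 1 (esym (mulr1 a))))).
  apply: (max_sum1 HM Mi (H1 _ (ex_intro _ 1 (esym (mulr1 _))))); ring.
have [i2 [k2 [[s0 ->] [[t' ->] E3]]]] : exists i1 k1, princ b i1 /\ princ i k1 /\ 1 = i1 + k1.
  apply: ideal_sum_one; try exact: princ_ideal.
  move=> M HM Hb H1; pose P := exist _ M HM.
  have nC : ~ C1 P.
    move=> CP; apply: (Hdis P); split => //; apply: HB.
    exact: (Hb b (ex_intro _ 1 (esym (mulr1 b)))).
  have Mk : M k := C1k P nC.
  apply: (max_sum1 HM (H1 _ (ex_intro _ 1 (esym (mulr1 _)))) Mk); by rewrite E1.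
exists (- r0), (- s0), (1 - i); split; [|split].
- exists t; have -> : 1 + a * - r0 = (a * r0 + (1 - i) * t) - a * r0 by rewrite -E2; ring.
  ring.
- exists t'; have -> : 1 + b * - s0 = (b * s0 + i * t') - b * s0 by rewrite -E3; ring.
  ring.
- have Ek : k = 1 - i by rewrite E1; ring.
  have -> : (1 - i) - (1 - i) ^+ 2 = i * k by rewrite Ek; ring.
  move=> M HM; pose P := exist _ M HM.
  have HMi := max_ideal HM.
  case: (classic (C1 P)) => CP.
  + apply: idealMr => //; exact: C1i CP.
  + apply: idealM => //; exact: C1k CP.
Qed.

Lemma C4_SZD : C4p -> strongly_zero_dim (@Max_closed R).
Proof.
move=> H A B [I [HI HIc]] [K [HK HKc]] Hdis.
have [i [k [Ii [Kk E1]]]] := ideal_sum_one HI HK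
  (fun M HM HIM HKM => Hdis (exist _ M HM) (conj ((HIc (exist _ M HM)).2 HIM) ((HKc (exist _ M HM)).2 HKM))).
have [r [s [e [[x Hx] [[y Hy] Jd]]]]] := H i k (esym E1).
have Pe : forall P : MaxR R, sval P e \/ sval P (1 - e).
  move=> P; apply: max_prime (svalP P) _.
  have -> : e * (1 - e) = e - e ^+ 2 by ring.
  exact: Jd _ (svalP P).
exists (V (1 - e)), (V e); split; [|split; [|split; [|split]]].
- apply: (@V_clopen _ _ e); first ring.
  have -> : (1 - e) * e = e - e ^+ 2 by ring.
  exact: Jd.
- apply: (@V_clopen _ _ (1 - e)); first ring.
  have -> : e * (1 - e) = e - e ^+ 2 by ring.
  exact: Jd.
- move=> P AP; have HP := svalP P; have HMi := max_ideal HP.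
  have Mi : sval P i := (HIc P).1 AP i Ii.
  case: (Pe P) => [Me|//].
  exfalso; apply: (max_not1 HP).
  have E3 : (1 : R) = (1 + i * r) - i * r by ring.
  rewrite E3; apply: idealB => //; last exact: idealMr.
  rewrite Hx; exact: idealMr.
- move=> P BP; have HP := svalP P; have HMi := max_ideal HP.
  have Mk : sval P k := (HKc P).1 BP k Kk.
  case: (Pe P) => [//|Me].
  exfalso; apply: (max_not1 HP).
  have E3 : (1 : R) = (1 + k * s) - k * s by ring.
  rewrite E3; apply: idealB => //; last exact: idealMr.
  rewrite Hy; exact: idealMr.
- move=> P [P1 P2]; apply: (max_sum1 (svalP P) P1 P2); ring.
Qed.

Lemma SZD_H : strongly_zero_dim (@Max_closed R) -> hausdorff (@Max_closed R) (@Max_same R).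
Proof.
move=> Hs P Q nPQ.
pose A := fun Z : MaxR R => forall x, sval P x -> sval Z x.
pose B := fun Z : MaxR R => forall x, sval Q x -> sval Z x.
have cA : Max_closed A by exists (sval P); split; [exact: max_ideal (svalP P)|].
have cB : Max_closed B by exists (sval Q); split; [exact: max_ideal (svalP Q)|].
have same : forall P' Z : MaxR R, (forall x, sval P' x -> sval Z x) -> Max_same P' Z.
  move=> P' Z HPZ x; split; first exact: HPZ.
  have [_ [_ Hm]] := svalP P'.
  exact: Hm _ (max_ideal (svalP Z)) HPZ (max_not1 (svalP Z)) x.
have dis : forall z, ~ (A z /\ B z).
  move=> Z [AZ BZ]; apply: nPQ => x.
  have h1 := same _ _ AZ x; have h2 := same _ _ BZ x; tauto.
have [C1 [C2 [[_ o1] [[_ o2] [h1 [h2 d]]]]]] := Hs A B cA cB dis.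
exists C1, C2; do !split => //; [apply: h1 | apply: h2] => //.
Qed.

Lemma C4_part2 : C4p -> forall a b : R, a + b = 1 ->
               exists r s : R, jacobson ((1 + a * r) * (1 + b * s)).
Proof.
move=> H a b Eab.
have [r [s [e [[x Hx] [[y Hy] Jd]]]]] := H a b Eab.
exists r, s; rewrite Hx Hy.
have -> : e * x * ((1 - e) * y) = (x * y) * (e - e ^+ 2) by ring.
exact: jacM.
Qed.
End Main.

Theorem theorem5p4 (R : comPzRingType) :
  let C1 := feckly_clean R in
  let C2 := strongly_zero_dim (@Max_closed R) /\ hausdorff (@Max_closed R) (@Max_same R) in
  let C3 := strongly_zero_dim (@Max_closed R) /\
            (forall a b : R, a + b = 1 ->
               exists r s : R, jacobson ((1 + a * r) * (1 + b * s))) in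
  let C4 := forall a b : R, a + b = 1 ->
              exists r s e : R,
                (exists x, 1 + a * r = e * x) /\
                (exists y, 1 + b * s = (1 - e) * y) /\
                jacobson (e - e ^+ 2) in
  (C1 <-> C2) /\ (C1 <-> C3) /\ (C1 <-> C4).
Proof.
move=> C1 C2 C3 C4.
have h14 := @C1_C4 R; have h41 := @C4_C1 R.
split; [|split]; split.
- move=> h; have hs := C4_SZD (h14 h); split => //; exact: SZD_H.
- by case=> hs _; apply: h41; apply: SZD_C4.
- move=> h; split; [exact: C4_SZD (h14 h) | exact: C4_part2 (h14 h)].
- by case=> hs _; apply: h41; apply: SZD_C4.
- exact: h14.
- exact: h41.
Qed.
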